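(* Let $\Omega\subseteq\mathbb R^d$ be a nonempty open set, $A\in\mathcal A(\Omega)$, $b,c\in L^\infty(\Omega;\mathbb C^d)$, $V\in L^1_{\rm loc}(\Omega)$ nonnegative. Let $1<r<p<\infty$ and $q=p/(p-1)$. Then: (i) $(A,b,c,V)\in\mathcal S_p(\Omega)$ if and only if $(A^*,c,b,V)\in\mathcal S_q(\Omega)$, where $A^*$ is the pointwise conjugate transpose. (ii) $\mathcal S_r(\Omega)\cap\mathcal S_p(\Omega)\subseteq\mathcal S_s(\Omega)$ for all $s\in[r,p]$. In particular, $\{\mathcal B_p(\Omega):p\in[2,\infty)\}$ is a decreasing chain, i.e. $\mathcal B_{p'}(\Omega)\subseteq\mathcal B_p(\Omega)$ whenever $2\le p\le p'<\infty$.
   Context: $\langle \xi,\sigma\rangle=\sum_j\xi_j\overline{\sigma_j}$. $\mathcal{A}(\Omega)$: measurable $A:\Omega\to\mathbb{C}^{d\times d}$ with $\lambda,\Lambda>0$ such that $\Re\langle A(x)\xi,\xi\rangle\ge\lambda|\xi|^2$, $|\langle A(x)\xi,\sigma\rangle|\le\Lambda|\xi||\sigma|$ a.e. $\mathcal{J}_s\xi=\frac s2(\xi+(1-\frac2s)\overline\xi)$. $\Delta_s(A)=\operatorname{ess\,inf}_{x}\min_{|\xi|=1}\Re\langle A(x)\xi,\xi+|1-2/s|\overline\xi\rangle$, $\mathcal A_s(\Omega)=\{A\in\mathcal A(\Omega):\Delta_s(A)>0\}$. $\Gamma_s^{(A,b,c,V)}(x,\xi)=\Re\langle A(x)\xi,\mathcal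 J_s\xi\rangle+\Re\langle b(x)+\mathcal J_sc(x),\xi\rangle+V(x)$. $\mathcal S_s(\Omega)$: quadruples $(A,b,c,V)$ ($A\in\mathcal A(\Omega)$, $b,c\in L^\infty(\Omega;\mathbb C^d)$, $0\le V\in L^1_{\rm loc}$) with $A\in\mathcal A_s(\Omega)$, $|b-c|\le M\sqrt V$ a.e. for some $M>0$, and $\Gamma_s(x,\xi)\ge\mu(|\xi|^2+V(x))$ for a.e. $x$, all $\xi$, for some $\mu>0$. $\mathcal B_p(\Omega)=\mathcal S_p(\Omega)\cap\mathcal S_{p/(p-1)}(\Omega)$. *)

(* Defs.v *)
From HB Require Import structures.
From mathcomp Require Import all_boot all_order all_algebra.
From mathcomp Require Import all_classical all_reals all_analysis.
From mathcomp Require Import complex.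
Set Implicit Arguments. Unset Strict Implicit. Unset Printing Implicit Defensive.
Import Order.TTheory GRing.Theory Num.Theory.
Import numFieldNormedType.Exports.
Local Open Scope classical_set_scope.
Local Open Scope ring_scope.

Section Defs.
Variables (R : realType) (d : nat).
Local Notation C := (R[i]).
Local Notation Pt := ('rV[R]_d).

Definition box (a b : Pt) : set Pt :=
  [set x | forall i : 'I_d, a 0 i <= x 0 i <= b 0 i].
Definition box_vol (a b : Pt) : R := \prod_(i < d) (b 0 i - a 0 i).

Definition leb_outer (E : set Pt) : \bar R :=
  ereal_inf [set s : \bar R | exists (a b : nat -> Pt),
    [/\ (forall k (i : 'I_d), a k 0 i <= b k 0 i),
        E `<=` \bigcup_k box (a k) (b k) &
        s = (\sum_(0 <= k <oo) (box_vol (a k) (b k))%:E)%E]].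

Definition leb_measurable (E : set Pt) : Prop :=
  forall T : set Pt, leb_outer T = (leb_outer (T `&` E) + leb_outer (T `\` E))%E.

Definition ae_on (Omega : set Pt) (P : Pt -> Prop) : Prop :=
  leb_outer [set x | Omega x /\ ~ P x] = 0%E.

Definition meas_on (Omega : set Pt) (f : Pt -> R) : Prop :=
  forall t : R, leb_measurable (Omega `&` [set x | t < f x]).
Definition cmeas_on (Omega : set Pt) (f : Pt -> C) : Prop :=
  meas_on Omega (fun x => complex.Re (f x)) /\ meas_on Omega (fun x => complex.Im (f x)).

(* Lebesgue integral over K of a nonnegative function (layer-cake formula) *)
Definition nnintegral (K : set Pt) (V : Pt -> R) : \bar R :=
  (\int[@lebesgue_measure R]_(t in `[0%R, +oo[%classic)
      leb_outer (K `&` [set x | (t < V x)%R]))%E.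

Definition cip (xi sigma : 'cV[C]_d) : C :=
  \sum_(j < d) xi j 0 * conjc (sigma j 0).
Definition cnorm (xi : 'cV[C]_d) : R :=
  Num.sqrt (\sum_(j < d) (Normc.normc (xi j 0)) ^+ 2).
Definition cconj (xi : 'cV[C]_d) : 'cV[C]_d := map_mx conjc xi.
Definition adjoint (M : 'M[C]_d) : 'M[C]_d := map_mx conjc (M^T).

Definition Js (s : R) (xi : 'cV[C]_d) : 'cV[C]_d :=
  ((s / 2)%:C)%C *: (xi + ((1 - 2 / s)%:C)%C *: cconj xi).

Definition ellA (Omega : set Pt) (A : Pt -> 'M[C]_d) : Prop :=
  (forall i j, cmeas_on Omega (fun x => A x i j)) /\
  exists lam Lam : R, [/\ 0 < lam, 0 < Lam &
    ae_on Omega (fun x => forall xi sigma : 'cV[C]_d,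
      lam * cnorm xi ^+ 2 <= complex.Re (cip (A x *m xi) xi) /\
      Normc.normc (cip (A x *m xi) sigma) <= Lam * cnorm xi * cnorm sigma)].

Definition Linf (Omega : set Pt) (b : Pt -> 'cV[C]_d) : Prop :=
  (forall j, cmeas_on Omega (fun x => b x j 0)) /\
  exists M : R, ae_on Omega (fun x => cnorm (b x) <= M).

Definition L1loc_nonneg (Omega : set Pt) (V : Pt -> R) : Prop :=
  (forall x, Omega x -> 0 <= V x) /\ meas_on Omega V /\
  forall K : set Pt, compact K -> K `<=` Omega -> (nnintegral K V < +oo)%E.

Definition ess_inf_on (Omega : set Pt) (g : Pt -> \bar R) : \bar R :=
  ereal_sup [set (delta%:E)%E | delta in [set delta : R |
                 ae_on Omega (fun x => (delta%:E <= g x)%E)]].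

Definition Delta (s : R) (Omega : set Pt) (A : Pt -> 'M[C]_d) : \bar R :=
  ess_inf_on Omega (fun x => ereal_inf
    [set ((complex.Re (cip (A x *m xi) (xi + (`|1 - 2 / s|)%:C%C *: cconj xi)))%:E)%E
       | xi in [set xi : 'cV[C]_d | cnorm xi = 1]]).

Definition ellA_s (s : R) (Omega : set Pt) (A : Pt -> 'M[C]_d) : Prop :=
  ellA Omega A /\ (0 < Delta s Omega A)%E.

Definition Gamma (s : R) (A : Pt -> 'M[C]_d) (b c : Pt -> 'cV[C]_d)
    (V : Pt -> R) (x : Pt) (xi : 'cV[C]_d) : R :=
  complex.Re (cip (A x *m xi) (Js s xi)) + complex.Re (cip (b x + Js s (c x)) xi) + V x.

Definition quad := ((Pt -> 'M[C]_d) * (Pt -> 'cV[C]_d) * (Pt -> 'cV[C]_d)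
                    * (Pt -> R))%type.

Definition S_class (s : R) (Omega : set Pt) : set quad :=
  [set Q | let: (A, b, c, V) := Q in
    [/\ (ellA Omega A /\ Linf Omega b /\ Linf Omega c /\ L1loc_nonneg Omega V),
        ellA_s s Omega A,
        exists M : R, 0 < M /\
          ae_on Omega (fun x => cnorm (b x - c x) <= M * Num.sqrt (V x)) &
        exists mu : R, 0 < mu /\
          ae_on Omega (fun x => forall xi : 'cV[C]_d,
            mu * (cnorm xi ^+ 2 + V x) <= Gamma s A b c V x xi)]].

Definition B_class (p : R) (Omega : set Pt) : set quad :=
  S_class p Omega `&` S_class (p / (p - 1)) Omega.

End Defs.

(* Main.v *)
Require Import Defs.
From HB Require Import structures.
From mathcomp Require Import all_boot all_order all_algebra.
From mathcomp Require Import all_classical all_reals all_analysis.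
From mathcomp Require Import complex.
From mathcomp.algebra_tactics Require Import ring lra.
Import Order.TTheory GRing.Theory Num.Theory.
Import numFieldNormedType.Exports.
Local Open Scope classical_set_scope.
Local Open Scope ring_scope.

Section Meas.
Variables (R : realType) (d : nat).
Local Notation Pt := ('rV[R]_d).
Local Open Scope ereal_scope.

Definition covS (E : set Pt) := [set s : \bar R | exists (a b : nat -> Pt),
    [/\ (forall k (i : 'I_d), (a k 0 i <= b k 0 i)%R),
        E `<=` \bigcup_k box (a k) (b k) &
        s = (\sum_(0 <= k <oo) (box_vol (a k) (b k))%:E)]].

Lemma leb_outerE (E : set Pt) : leb_outer E = ereal_inf (covS E).
Proof. by []. Qed.

Lemma box_vol_ge0 (a b : Pt) : (forall i : 'I_d, (a 0 i <= b 0 i)%R) -> (0 <= box_vol a b)%R.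
Proof. by move=> h; apply: prodr_ge0 => i _; rewrite subr_ge0. Qed.

Lemma leb_outer_ge0 (E : set Pt) : 0 <= leb_outer E.
Proof.
apply: le_ereal_inf_tmp => _ [a [b [hab _ ->]]].
by apply: nneseries_ge0 => k _; rewrite lee_fin box_vol_ge0.
Qed.

Lemma leb_outer_mono (A B : set Pt) : A `<=` B -> leb_outer A <= leb_outer B.
Proof.
move=> AB; apply: ereal_inf_le_tmp => _ [a [b [hab BB ->]]].
by exists a, b; split => //; apply: subset_trans AB BB.
Qed.

Lemma leb_outer0 : (0 < d)%N -> leb_outer (set0 : set Pt) = 0.
Proof.
move=> d0; apply/eqP; rewrite eq_le leb_outer_ge0 andbT.
apply: ereal_inf_lbound; exists (fun=> (0 : Pt)%R), (fun=> (0 : Pt)%R); split => //=.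
apply/esym; rewrite eseries0 // => k _ _.
by rewrite /box_vol (bigD1 (Ordinal d0)) //= mxE subrr mul0r.
Qed.

Lemma leb_outer_sub : sigma_subadditive (@leb_outer R d).
Proof.
move=> A; have [[i ioo]|] := pselect (exists i, leb_outer (A i) = +oo).
  rewrite (eseries_pinfty _ _ ioo) ?leey// => n _.
  by rewrite -ltNye (lt_le_trans _ (leb_outer_ge0 _)).
rewrite -forallNE => Aoo.
suff add2e (e : {posnum R}) :
    leb_outer (\bigcup_n A n) <= \sum_(i <oo) leb_outer (A i) + e%:num%:E.
  by apply/lee_addgt0Pr => _/posnumP[].
rewrite (le_trans _ (epsilon_trick _ _ _))//; last first.
  by move=> n; exact: leb_outer_ge0.
pose P n (B : (nat -> Pt) * (nat -> Pt)) :=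
  [/\ (forall k (i : 'I_d), (B.1 k 0 i <= B.2 k 0 i)%R),
        A n `<=` \bigcup_k box (B.1 k) (B.2 k) &
  \sum_(k <oo) (box_vol (B.1 k) (B.2 k))%:E <= leb_outer (A n) + (e%:num / (2 ^ n.+1)%:R)%:E].
have [G PG] : {G : nat -> (nat -> Pt) * (nat -> Pt) & forall n, P n (G n)}.
  apply: (@choice _ _ P) => n; rewrite /P leb_outerE.
  set S := (X in ereal_inf X); move infS : (ereal_inf S) => iS.
  case: iS infS => [r Sr|Soo|Soo].
  - have en1 : (0 < e%:num / (2 ^ n.+1)%:R)%R by [].
    have /(lb_ereal_inf_adherent en1) : ereal_inf S \is a fin_num by rewrite Sr.
    move=> [x [a [b [hab AnB muBx]]] xS].
    by exists (a, b); split => //=; rewrite -muBx -Sr; exact/ltW.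
  - by have := Aoo n; rewrite leb_outerE -/S Soo.
  - suff : lbound S 0 by move/le_ereal_inf_tmp; rewrite Soo.
    move=> /= _ [a [b [hab _ ->]]].
    by apply: nneseries_ge0 => k _; rewrite lee_fin box_vol_ge0.
pose mu (p : nat * nat) := (box_vol ((G p.1).1 p.2) ((G p.1).2 p.2))%:E.
have muG_ge0 x : 0 <= mu x.
  by rewrite /mu lee_fin box_vol_ge0 // => i; case: (PG x.1) => h _ _; exact: h.
apply: (@le_trans _ _ (\esum_(i in setT) mu i)).
  rewrite leb_outerE; apply: ereal_inf_lbound => /=.
  have /card_esym/ppcard_eqP[f] := card_nat2.
  exists (fun k => (G (f k).1).1 (f k).2), (fun k => (G (f k).1).2 (f k).2).
  split.
  - by move=> k i; case: (PG (f k).1) => h _ _; exact: h.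
  - move=> t [i _] /= Ait; case: (PG i) => _ /(_ t Ait) [j _ Bt] _.
    exists (f^-1%FUN (i, j)) => //=.
    by rewrite invK ?inE.
  rewrite -(esum_pred_image mu _ xpredT) ?[fun=> _]set_true//.
  congr esum; apply/seteqP; split => [x _|x _] //=; exists (f^-1%FUN x) => //; rewrite invK ?inE //.
rewrite (_ : esum _ _ = \sum_(i <oo) \sum_(j <oo ) mu (i, j)); last first.
  pose J : nat -> set (nat * nat) := fun i => [set (i, j) | j in setT].
  rewrite (_ : setT = \bigcup_k J k); last first.
    by rewrite predeqE => -[a b]; split => // _; exists a => //; exists b.
  rewrite esum_bigcupT /=; last 2 first.
    - apply/trivIsetP => i j _ _ ij.
      rewrite predeqE => -[n m] /=; split => //= -[] [_] _ [<-{n} _].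
      by move=> [m' _] [] /esym/eqP; rewrite (negbTE ij).
    - by [].
  rewrite -(image_id [set: nat]) -fun_true esum_pred_image//; last first.
    by move=> n _; exact: esum_ge0.
  apply: eq_eseriesr => /= j _.
  rewrite -(esum_pred_image mu (pair j) predT)//=; last first.
    by move=> ? ? _ _; exact: (@can_inj _ _ _ snd).
  by congr esum; rewrite predeqE => -[a b]; split; move=> [i _ <-]; exists i.
apply: lee_lim.
- apply: is_cvg_nneseries => n *.
  by apply: nneseries_ge0 => m *; exact: (muG_ge0 (n, m)).
- by apply: is_cvg_nneseries => n *; apply: adde_ge0 => //; exact: leb_outer_ge0.
- by near=> n; apply: lee_sum => i _; case: (PG i).
Unshelve. all: by end_near. Qed.

End Meas.

Lemma leb_outer_d0 (R : realType) (d : nat) (E : set 'rV[R]_d) : d = 0%N -> leb_outer E = +oo%E.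
Proof.
move=> d0; apply/eqP; rewrite eq_le leey /=.
apply: le_ereal_inf_tmp => _ [a [b [_ _ ->]]].
have h1 k : box_vol (a k) (b k) = 1.
  by rewrite /box_vol big1 // => i _; exfalso; move: (ltn_ord i); rewrite {2}d0.
under eq_fun do under eq_bigr do rewrite h1.
set s := (X in (_ <= X)%E).
have hs k : ((k%:R)%:E <= s)%E.
  have := @nneseries_lim_ge R (fun=> 1%:E) xpredT 0 k.
  rewrite sumEFin sumr_const_nat subn0; apply => //.
case Es: s => [r| |] //.
- have := hs (Num.trunc r).+1; rewrite Es lee_fin => /(lt_le_trans (truncnS_gt r)).
  by rewrite ltxx.
- by have := hs 0%N; rewrite Es.
Qed.

Definition lo (R : realType) (d : nat) (h : (0 < d)%N) : set 'rV[R]_d -> \bar R :=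
  @leb_outer R d.
Arguments lo {R d}.

HB.instance Definition _ (R : realType) (d : nat) (h : (0 < d)%N) :=
  isOuterMeasure.Build R _ (lo h) (@leb_outer0 R d h) (@leb_outer_ge0 R d)
    (@leb_outer_mono R d) (@leb_outer_sub R d).

Section Cara.
Variables (R : realType) (d : nat) (h : (0 < d)%N).
Local Notation Pt := ('rV[R]_d).

Lemma leb_cara (E : set Pt) : leb_measurable E <-> (lo h).-caratheodory E.
Proof. by split => H X; have := H X; rewrite /lo setDE. Qed.

Lemma meas_onN (Om : set Pt) (f : Pt -> R) :
  meas_on Om f -> meas_on Om (fun x => - f x).
Proof.
move=> mf t.
have M u : (lo h).-caratheodory (Om `&` [set x | u < f x]) by apply/(leb_cara _); apply: mf.
have eq1 : Om = \bigcup_n (Om `&` [set x | - (n%:R) < f x]).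
  apply/seteqP; split => [x Ox|x [n _ [] //]].
  exists (Num.trunc `|f x|).+1 => //; split => //=.
  rewrite ltrNl; apply: le_lt_trans (truncnS_gt _); by rewrite -normrN ler_norm.
have MO : (lo h).-caratheodory Om.
  by rewrite eq1; apply: caratheodory_measurable_bigcup => n; exact: M.
have eq2 : Om `&` [set x | t < - f x] =
    \bigcup_m (Om `\` (Om `&` [set x | - t - (m.+1%:R)^-1 < f x])).
  apply/seteqP; split => [x [Ox /= tf]|x [m _ [Ox /= nf]]]; last first.
    split => //=; rewrite ltrNr; apply: (@le_lt_trans _ _ (- t - (m.+1%:R)^-1)).
      by rewrite leNgt; apply/negP => H; apply: nf.
    by rewrite gtrDl oppr_lt0 invr_gt0 ltr0n.
  have hp : 0 < - t - f x by rewrite subr_gt0 -ltrNr.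
  exists (Num.trunc (- t - f x)^-1) => //; split => // -[_] /=.
  rewrite ltrBlDr -ltrBlDl => H.
  have := truncnS_gt ((- t - f x)^-1).
  rewrite -(ltf_pV2 (F:=R)) ?posrE ?invr_gt0 ?ltr0n // invrK => H2.
  by have := lt_trans H2 H; rewrite ltxx.
apply/leb_cara; rewrite eq2; apply: caratheodory_measurable_bigcup => m.
by apply: caratheodory_measurable_setD => //; exact: M.
Qed.

End Cara.

Set Implicit Arguments. Unset Strict Implicit. Unset Printing Implicit Defensive.

Section Alg.
Variables (R : realType) (d : nat).
Local Notation C := (R[i]).
Local Notation V := ('cV[C]_d).
Implicit Types (u w : V) (M A : 'M[C]_d) (b c : V) (a s k p q : R).

Lemma ReD (x y : C) : complex.Re (x + y) = complex.Re x + complex.Re y.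
Proof. by case: x => a b; case: y. Qed.
Lemma ImD (x y : C) : complex.Im (x + y) = complex.Im x + complex.Im y.
Proof. by case: x => a b; case: y. Qed.
Lemma ReM (x y : C) : complex.Re (x * y) = complex.Re x * complex.Re y - complex.Im x * complex.Im y.
Proof. by case: x => a b; case: y. Qed.
Lemma ImM (x y : C) : complex.Im (x * y) = complex.Re x * complex.Im y + complex.Im x * complex.Re y.
Proof. by case: x => a b; case: y. Qed.
Lemma ReJ (x : C) : complex.Re (conjc x) = complex.Re x.
Proof. by case: x. Qed.
Lemma ImJ (x : C) : complex.Im (conjc x) = - complex.Im x.
Proof. by case: x. Qed.
Lemma ReC (a : R) : complex.Re (a%:C)%C = a. Proof. by []. Qed.
Lemma ImC (a : R) : complex.Im (a%:C)%C = 0. Proof. by []. Qed.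

Definition re (u : V) j := complex.Re (u j 0).
Definition im (u : V) j := complex.Im (u j 0).

Lemma ReCip (u v : V) : complex.Re (cip u v) = \sum_j (re u j * re v j + im u j * im v j).
Proof.
rewrite /cip (big_morph (@complex.Re R) ReD (erefl _)); apply: eq_bigr => j _.
by rewrite ReM ReJ ImJ /re /im; ring.
Qed.

Lemma cnorm2 (u : V) : cnorm u ^+ 2 = \sum_j (re u j ^+ 2 + im u j ^+ 2).
Proof.
have e j : Normc.normc (u j 0) ^+ 2 = re u j ^+ 2 + im u j ^+ 2.
  by rewrite /re /im; case: (u j 0) => a b /=; rewrite sqr_sqrtr // addr_ge0 // sqr_ge0.
rewrite /cnorm sqr_sqrtr; first by apply: eq_bigr => j _; rewrite e.
by apply: sumr_ge0 => j _; rewrite sqr_ge0.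
Qed.

Lemma Js_re s (u : V) j : s != 0 -> re (Js s u) j = (s - 1) * re u j.
Proof.
move=> s0; rewrite /re /Js !mxE ReM ReC ImC ReD ImD ReM ImM ReC ImC ReJ ImJ.
by field.
Qed.
Lemma Js_im s (u : V) j : s != 0 -> im (Js s u) j = im u j.
Proof.
move=> s0; rewrite /im /Js !mxE ImM ReC ImC ReD ImD ReM ImM ReC ImC ReJ ImJ.
by field.
Qed.


Lemma re_add (u v : V) j : re (u + v) j = re u j + re v j.
Proof. by rewrite /re mxE ReD. Qed.
Lemma im_add (u v : V) j : im (u + v) j = im u j + im v j.
Proof. by rewrite /im mxE ImD. Qed.
Lemma re_opp (u : V) j : re (- u) j = - re u j.
Proof. by rewrite /re mxE; case: (u j 0). Qed.
Lemma im_opp (u : V) j : im (- u) j = - im u j.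
Proof. by rewrite /im mxE; case: (u j 0). Qed.
Lemma re_scaleR (a : R) (u : V) j : re ((a%:C)%C *: u) j = a * re u j.
Proof. by rewrite /re mxE ReM ReC ImC mul0r subr0. Qed.
Lemma im_scaleR (a : R) (u : V) j : im ((a%:C)%C *: u) j = a * im u j.
Proof. by rewrite /im mxE ImM ReC ImC mul0r addr0. Qed.
Lemma re_cconj (u : V) j : re (cconj u) j = re u j.
Proof. by rewrite /re mxE ReJ. Qed.
Lemma im_cconj (u : V) j : im (cconj u) j = - im u j.
Proof. by rewrite /im mxE ImJ. Qed.
Lemma re_i (u : V) j : re ('i%C *: u) j = - im u j.
Proof. by rewrite /re mxE ReM /=; rewrite mul0r mul1r sub0r. Qed.
Lemma im_i (u : V) j : im ('i%C *: u) j = re u j.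
Proof. by rewrite /im mxE ImM /=; rewrite mul0r mul1r add0r. Qed.

Definition P1 (w u : V) := \sum_j re w j * re u j.
Definition P2 (w u : V) := \sum_j im w j * im u j.

Lemma ReCipP (w u : V) : complex.Re (cip w u) = P1 w u + P2 w u.
Proof. by rewrite ReCip /P1 /P2 big_split. Qed.

Lemma sum_scale (F G : 'I_d -> R) a : (forall j, F j = a * G j) -> \sum_j F j = a * \sum_j G j.
Proof. by move=> h; rewrite mulr_sumr; apply: eq_bigr => j _. Qed.
Lemma sum_add (F G H : 'I_d -> R) : (forall j, F j = G j + H j) -> \sum_j F j = \sum_j G j + \sum_j H j.
Proof. by move=> h; rewrite -big_split; apply: eq_bigr => j _. Qed.

Lemma P1C w u : P1 w u = P1 u w.
Proof. by apply: eq_bigr => j _; rewrite mulrC. Qed.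
Lemma P2C w u : P2 w u = P2 u w.
Proof. by apply: eq_bigr => j _; rewrite mulrC. Qed.
Lemma P1Dl u v w : P1 (u + v) w = P1 u w + P1 v w.
Proof. by apply: sum_add => j; rewrite re_add mulrDl. Qed.
Lemma P2Dl u v w : P2 (u + v) w = P2 u w + P2 v w.
Proof. by apply: sum_add => j; rewrite im_add mulrDl. Qed.
Lemma P1Nl u w : P1 (- u) w = - P1 u w.
Proof. by rewrite -mulN1r; apply: sum_scale => j; rewrite re_opp; ring. Qed.
Lemma P2Nl u w : P2 (- u) w = - P2 u w.
Proof. by rewrite -mulN1r; apply: sum_scale => j; rewrite im_opp; ring. Qed.
Lemma P1Zl a u w : P1 ((a%:C)%C *: u) w = a * P1 u w.
Proof. by apply: sum_scale => j; rewrite re_scaleR mulrA. Qed.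
Lemma P2Zl a u w : P2 ((a%:C)%C *: u) w = a * P2 u w.
Proof. by apply: sum_scale => j; rewrite im_scaleR mulrA. Qed.
Lemma P1Jl s u w : s != 0 -> P1 (Js s u) w = (s - 1) * P1 u w.
Proof. by move=> s0; apply: sum_scale => j; rewrite Js_re // mulrA. Qed.
Lemma P2Jl s u w : s != 0 -> P2 (Js s u) w = P2 u w.
Proof. by move=> s0; apply: eq_bigr => j _; rewrite Js_im. Qed.
Lemma P1Jr s u w : s != 0 -> P1 w (Js s u) = (s - 1) * P1 w u.
Proof. by move=> s0; rewrite P1C P1Jl // P1C. Qed.
Lemma P2Jr s u w : s != 0 -> P2 w (Js s u) = P2 w u.
Proof. by move=> s0; rewrite P2C P2Jl // P2C. Qed.
Lemma P1ii u w : P1 ('i%C *: u) ('i%C *: w) = P2 u w.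
Proof. by apply: eq_bigr => j _; rewrite !re_i mulrNN. Qed.
Lemma P2ii u w : P2 ('i%C *: u) ('i%C *: w) = P1 u w.
Proof. by apply: eq_bigr => j _; rewrite !im_i. Qed.
Lemma P1k k u w : P1 w (u + (k%:C)%C *: cconj u) = (1 + k) * P1 w u.
Proof. by apply: sum_scale => j; rewrite re_add re_scaleR re_cconj; ring. Qed.
Lemma P2k k u w : P2 w (u + (k%:C)%C *: cconj u) = (1 - k) * P2 w u.
Proof. by apply: sum_scale => j; rewrite im_add im_scaleR im_cconj; ring. Qed.
Lemma P1Zr a u w : P1 w ((a%:C)%C *: u) = a * P1 w u.
Proof. by rewrite P1C P1Zl P1C. Qed.
Lemma P2Zr a u w : P2 w ((a%:C)%C *: u) = a * P2 w u.
Proof. by rewrite P2C P2Zl P2C. Qed.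

Lemma N2P (u : V) : cnorm u ^+ 2 = P1 u u + P2 u u.
Proof. by rewrite cnorm2 /P1 /P2 -big_split; apply: eq_bigr => j _; rewrite !expr2. Qed.
Lemma P1uu_ge0 u : 0 <= P1 u u.
Proof. by apply: sumr_ge0 => j _; rewrite -expr2 sqr_ge0. Qed.
Lemma P2uu_ge0 u : 0 <= P2 u u.
Proof. by apply: sumr_ge0 => j _; rewrite -expr2 sqr_ge0. Qed.

Lemma conjcD' (x y : C) : conjc (x + y) = conjc x + conjc y.
Proof. by case: x => a b; case: y => c e /=; congr Complex; ring. Qed.
Lemma conjcM' (x y : C) : conjc (x * y) = conjc x * conjc y.
Proof. by case: x => a b; case: y => c e /=; congr Complex; ring. Qed.
Lemma conjcK' (x : C) : conjc (conjc x) = x.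
Proof. by case: x => a b /=; rewrite opprK. Qed.
Lemma conjc_sum (F : 'I_d -> C) : conjc (\sum_j F j) = \sum_j conjc (F j).
Proof.
have c0 : conjc (0 : C) = 0 by rewrite /= oppr0.
exact: (big_morph conjc conjcD' c0).
Qed.

Lemma cipC (u v : V) : cip v u = conjc (cip u v).
Proof.
rewrite /cip conjc_sum; apply: eq_bigr => j _.
by rewrite conjcM' conjcK' mulrC.
Qed.

Lemma cip_adj (M : 'M[C]_d) (u v : V) : cip (M *m u) v = cip u (adjoint M *m v).
Proof.
rewrite /cip.
under eq_bigr do rewrite mxE mulr_suml.
rewrite exchange_big /=; apply: eq_bigr => k _.
rewrite mxE conjc_sum mulr_sumr; apply: eq_bigr => j _.
by rewrite !mxE conjcM' conjcK'; ring.
Qed.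

Lemma adjointK (M : 'M[C]_d) : adjoint (adjoint M) = M.
Proof. by apply/matrixP => i j; rewrite !mxE conjcK'. Qed.

Lemma normc_conj (z : C) : Normc.normc (conjc z) = Normc.normc z.
Proof. by case: z => a b /=; rewrite sqrrN. Qed.

Lemma ReCipC (u v : V) : complex.Re (cip u v) = complex.Re (cip v u).
Proof. by rewrite !ReCipP P1C P2C. Qed.


Definition Gf s (M : 'M[C]_d) (u : V) := complex.Re (cip (M *m u) (Js s u)).
Definition Ff k (M : 'M[C]_d) (u : V) :=
  complex.Re (cip (M *m u) (u + (k%:C)%C *: cconj u)).

Lemma G_P s M u : s != 0 -> Gf s M u = (s - 1) * P1 (M *m u) u + P2 (M *m u) u.
Proof. by move=> s0; rewrite /Gf ReCipP P1Jr // P2Jr. Qed.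
Lemma F_P k M u : Ff k M u = (1 + k) * P1 (M *m u) u + (1 - k) * P2 (M *m u) u.
Proof. by rewrite /Ff ReCipP P1k P2k. Qed.

Lemma Mi (M : 'M[C]_d) (u : V) : M *m ('i%C *: u) = 'i%C *: (M *m u).
Proof. by rewrite scalemxAr. Qed.
Lemma MZ (M : 'M[C]_d) a (u : V) : M *m ((a%:C)%C *: u) = (a%:C)%C *: (M *m u).
Proof. by rewrite scalemxAr. Qed.

Lemma N2i u : cnorm ('i%C *: u) ^+ 2 = cnorm u ^+ 2.
Proof. by rewrite !N2P P1ii P2ii addrC. Qed.
Lemma N2Z a u : cnorm ((a%:C)%C *: u) ^+ 2 = a ^+ 2 * cnorm u ^+ 2.
Proof. by rewrite !N2P P1Zl P1Zr P2Zl P2Zr; ring. Qed.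
Lemma G_Z s M a u : s != 0 -> Gf s M ((a%:C)%C *: u) = a ^+ 2 * Gf s M u.
Proof. by move=> s0; rewrite !G_P // MZ P1Zl P1Zr P2Zl P2Zr; ring. Qed.
Lemma F_Z k M a u : Ff k M ((a%:C)%C *: u) = a ^+ 2 * Ff k M u.
Proof. by rewrite !F_P MZ P1Zl P1Zr P2Zl P2Zr; ring. Qed.

Lemma phase1 s M u : 0 < s -> exists v, cnorm v ^+ 2 = cnorm u ^+ 2 /\
  Ff (`|1 - 2 / s|) M u = (2 / s) * Gf s M v.
Proof.
move=> s0; have s0' : s != 0 by rewrite gt_eqF.
have [t0|t0] := leP 0 (1 - 2 / s).
  exists u; split => //; rewrite ger0_norm // F_P G_P //.
  by set a := P1 _ _; set b := P2 _ _; field.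
exists ('i%C *: u); split; first by rewrite N2i.
rewrite ltr0_norm // F_P G_P // Mi P1ii P2ii.
by set a := P1 _ _; set b := P2 _ _; field.
Qed.

Lemma phase2 s M u : 0 < s -> exists v, cnorm v ^+ 2 = cnorm u ^+ 2 /\
  Gf s M u = (s / 2) * Ff (`|1 - 2 / s|) M v.
Proof.
move=> s0; have s0' : s != 0 by rewrite gt_eqF.
have [t0|t0] := leP 0 (1 - 2 / s).
  exists u; split => //; rewrite ger0_norm // F_P G_P //.
  by set a := P1 _ _; set b := P2 _ _; field.
exists ('i%C *: u); split; first by rewrite N2i.
rewrite ltr0_norm // F_P G_P // Mi P1ii P2ii.
by set a := P1 _ _; set b := P2 _ _; field.
Qed.

Lemma N2J s u : s != 0 -> cnorm (Js s u) ^+ 2 = (s - 1) ^+ 2 * P1 u u + P2 u u.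
Proof. by move=> s0; rewrite N2P P1Jl // P1Jr // P2Jl // P2Jr //; ring. Qed.

Lemma N2J_lb s u : s != 0 ->
  Num.min ((s - 1) ^+ 2) 1 * cnorm u ^+ 2 <= cnorm (Js s u) ^+ 2.
Proof.
move=> s0; rewrite N2J // N2P mulrDr lerD //.
  by apply: ler_wpM2r; [exact: P1uu_ge0 | rewrite ge_min lexx].
by rewrite -[leRHS]mul1r; apply: ler_wpM2r; [exact: P2uu_ge0 | rewrite ge_min lexx orbT].
Qed.

Lemma min_gt0 s : 1 < s -> 0 < Num.min ((s - 1) ^+ 2) 1.
Proof. by move=> s1; rewrite lt_min ltr01 andbT exprn_gt0 // subr_gt0. Qed.

Lemma G_dual p q M u : p != 0 -> q != 0 -> (p - 1) * (q - 1) = 1 ->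
  Gf q (adjoint M) u = Gf p M (Js q u).
Proof.
move=> p0 q0 h; rewrite /Gf.
transitivity (complex.Re (cip (Js q u) (adjoint M *m u))); first exact: ReCipC.
rewrite -cip_adj !ReCipP P1Jr // P1Jr // P2Jr // P2Jr //.
by rewrite mulrA h mul1r.
Qed.

Definition Gam s (A : 'M[C]_d) (b c : V) (v : R) (u : V) :=
  complex.Re (cip (A *m u) (Js s u)) + complex.Re (cip (b + Js s c) u) + v.

Lemma Gam_aff s A b c v u : s != 0 -> Gam s A b c v u =
  (s - 1) * (P1 (A *m u) u + P1 c u) + (P2 (A *m u) u + P1 b u + P2 b u + P2 c u + v).
Proof.
move=> s0; rewrite /Gam !ReCipP P1Jr // P2Jr // P1Dl P2Dl P1Jl // P2Jl //.
set a1 := P1 _ _; set a2 := P2 _ _; set a3 := P1 _ _; set a4 := P2 _ _.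
set a5 := P1 _ _; set a6 := P2 _ _.
ring.
Qed.

Lemma add3_congr (x1 x2 y1 y2 v : R) : x1 = y1 -> x2 = y2 -> x1 + x2 + v = y1 + y2 + v.
Proof. by move=> -> ->. Qed.

Lemma ReD_dual p q b c u : p != 0 -> q != 0 -> (p - 1) * (q - 1) = 1 ->
  complex.Re (cip (b + Js p c) (Js q u)) = complex.Re (cip (c + Js q b) u).
Proof.
move=> p0 q0 h.
have e1 : P1 (b + Js p c) (Js q u) = (q - 1) * P1 b u + P1 c u.
  by rewrite P1Dl P1Jr // P1Jl // P1Jr // mulrA h mul1r.
have e2 : P2 (b + Js p c) (Js q u) = P2 b u + P2 c u.
  by rewrite P2Dl P2Jr // P2Jl // P2Jr.
have e3 : P1 (c + Js q b) u = P1 c u + (q - 1) * P1 b u.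
  by rewrite P1Dl P1Jl.
have e4 : P2 (c + Js q b) u = P2 c u + P2 b u.
  by rewrite P2Dl P2Jl.
rewrite [LHS]ReCipP [RHS]ReCipP [in LHS]e1 [in LHS]e2 [in RHS]e3 [in RHS]e4.
set a1 := P1 b u; set a2 := P1 c u; set a3 := P2 b u; set a4 := P2 c u.
ring.
Qed.

Lemma Gam_dual p q A b c v u : p != 0 -> q != 0 -> (p - 1) * (q - 1) = 1 ->
  Gam p A b c v (Js q u) = Gam q (adjoint A) c b v u.
Proof.
move=> p0 q0 h; rewrite /Gam; apply: add3_congr.
  exact: (esym (G_dual A u p0 q0 h)).
exact: ReD_dual.
Qed.

End Alg.


Section Main.
Variables (R : realType) (d : nat).
Local Notation C := (R[i]).
Local Notation V := ('cV[C]_d).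
Local Notation Pt := ('rV[R]_d).
Implicit Types (u w : V) (M : 'M[C]_d) (s k : R).

Lemma cnorm_ge0 u : 0 <= cnorm u.
Proof. exact: sqrtr_ge0. Qed.

Lemma N2_zero u : cnorm u ^+ 2 = 0 -> forall w, P1 w u = 0 /\ P2 w u = 0.
Proof.
move=> h w; have h1 := P1uu_ge0 u; have h2 := P2uu_ge0 u.
rewrite N2P in h.
have e1 : P1 u u = 0 by lra.
have e2 : P2 u u = 0 by lra.
have hr : forall j, true -> 0 <= re u j * re u j by move=> *; rewrite -expr2 sqr_ge0.
have hi : forall j, true -> 0 <= im u j * im u j by move=> *; rewrite -expr2 sqr_ge0.
have r0 j : re u j = 0.
  by have /eqP := psumr_eq0P hr e1 (isT : true) (i := j); rewrite mulf_eq0 orbb => /eqP.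
have i0 j : im u j = 0.
  by have /eqP := psumr_eq0P hi e2 (isT : true) (i := j); rewrite mulf_eq0 orbb => /eqP.
by split; apply: big1 => j _; rewrite ?r0 ?i0 mulr0.
Qed.


Lemma cnorm_eq1 u : cnorm u ^+ 2 = 1 -> cnorm u = 1.
Proof. by move=> h; apply/eqP; rewrite -(sqrp_eq1 (cnorm_ge0 u)) h. Qed.

Lemma PW1 s M (delta : R) : 0 < s ->
  (forall xi, cnorm xi = 1 -> delta <= Ff (`|1 - 2 / s|) M xi) ->
  forall u, s / 2 * delta * cnorm u ^+ 2 <= Gf s M u.
Proof.
move=> s0 H u; have [v [Nv Gu]] := phase2 M u s0.
rewrite Gu -Nv; have s20 : 0 < s / 2 by rewrite divr_gt0.
case: (eqVneq (cnorm v ^+ 2) 0) => [N0|N0].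
  have [e1 e2] := N2_zero N0 (M *m v).
  by rewrite N0 mulr0 F_P e1 e2 !mulr0 addr0 mulr0.
have n0 : 0 < cnorm v.
  by rewrite lt_neqAle cnorm_ge0 andbT; apply: contra N0 => /eqP <-; rewrite expr0n.
set n := cnorm v in n0 N0 *.
pose xi := ((n^-1)%:C)%C *: v.
have Nxi : cnorm xi = 1.
  by apply: cnorm_eq1; rewrite /xi N2Z -/n exprVn mulVf //.
have := H xi Nxi; rewrite /xi F_Z -/n => hd.
rewrite -mulrA; apply: ler_wpM2l; first exact: ltW.
have hn2 : 0 < n ^+ 2 by rewrite exprn_gt0.
have := ler_wpM2l (ltW hn2) hd.
by rewrite exprVn mulrA mulfV ?gt_eqF // mul1r mulrC.
Qed.

Lemma PW2 s M (delta : R) : 0 < s ->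
  (forall u, delta * cnorm u ^+ 2 <= Gf s M u) ->
  forall xi, cnorm xi = 1 -> 2 / s * delta <= Ff (`|1 - 2 / s|) M xi.
Proof.
move=> s0 H xi N1; have [v [Nv Fx]] := phase1 M xi s0.
rewrite Fx; apply: ler_wpM2l; first by rewrite ltW ?divr_gt0.
by have := H v; rewrite Nv N1 expr1n mulr1.
Qed.

Lemma ae_mono (Om : set Pt) (P Q : Pt -> Prop) :
  (forall x, Om x -> P x -> Q x) -> ae_on Om P -> ae_on Om Q.
Proof.
move=> PQ h; apply/eqP; rewrite eq_le leb_outer_ge0 andbT -h.
by apply: leb_outer_mono => x [Ox nQ]; split => // Px; apply: nQ; exact: PQ.
Qed.

Lemma ae_d0 (Om : set Pt) (P : Pt -> Prop) : ae_on Om P -> (0 < d)%N.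
Proof.
rewrite lt0n; case: eqP => // d0 h.
by move: h; rewrite /ae_on leb_outer_d0.
Qed.

Lemma ae_and (Om : set Pt) (P Q : Pt -> Prop) :
  ae_on Om P -> ae_on Om Q -> ae_on Om (fun x => P x /\ Q x).
Proof.
move=> hP hQ; have h := ae_d0 hP.
apply/eqP; rewrite eq_le leb_outer_ge0 andbT.
have -> : leb_outer [set x | Om x /\ ~ (P x /\ Q x)] =
   lo h [set x | Om x /\ ~ (P x /\ Q x)] by [].
apply: le_trans (le_outer_measure (lo h) _ ([set x | Om x /\ ~ P x] `|` [set x | Om x /\ ~ Q x]) _) _.
  move=> x [Ox nPQ]; case: (pselect (P x)) => Px; [right|left]; split => //.
  by move=> Qx; apply: nPQ.
apply: le_trans (outer_measureU2 (lo h) _ _) _.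
move: hP hQ; rewrite /ae_on => hP hQ.
by rewrite [X in (X + _)%E]hP [X in (_ + X)%E]hQ adde0.
Qed.

Definition PosG s (Om : set Pt) (A : Pt -> 'M[C]_d) :=
  exists delta, 0 < delta /\ ae_on Om (fun x => forall u, delta * cnorm u ^+ 2 <= Gf s (A x) u).

Lemma Delta_pos s (Om : set Pt) (A : Pt -> 'M[C]_d) : 0 < s ->
  (0 < Delta s Om A)%E <-> PosG s Om A.
Proof.
move=> s0; split.
  move=> /ereal_sup_gt [_ [delta hae <-]] /=; rewrite lte_fin => dp.
  exists (s / 2 * delta); split; first by rewrite mulr_gt0 // divr_gt0.
  apply: ae_mono hae => x _ hx; apply: PW1 => // xi N1.
  rewrite -lee_fin; apply: le_trans hx _; apply: ereal_inf_lbound.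
  by exists xi.
move=> [delta [dp hae]].
apply: (@lt_le_trans _ _ (2 / s * delta)%:E).
  by rewrite lte_fin mulr_gt0 // divr_gt0.
apply: ereal_sup_ubound; exists (2 / s * delta) => //.
apply: ae_mono hae => x _ hx; apply: le_ereal_inf_tmp => _ [xi /= N1 <-].
by rewrite lee_fin; apply: PW2.
Qed.


Lemma normcN' (z : C) : Normc.normc (- z) = Normc.normc z.
Proof. by case: z => a b /=; rewrite !sqrrN. Qed.

Lemma cnormB u w : cnorm (u - w) = cnorm (w - u).
Proof.
rewrite /cnorm; congr Num.sqrt; apply: eq_bigr => j _.
by rewrite -[u - w]opprB mxE normcN'.
Qed.

Lemma ellA_adj (Om : set Pt) (A : Pt -> 'M[C]_d) :
  ellA Om A -> ellA Om (fun x => adjoint (A x)).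
Proof.
case=> meas [lam [Lam [l0 L0 hae]]]; have h := ae_d0 hae; split.
  move=> i j; case: (meas j i) => hre him; split.
    have -> : (fun x => complex.Re (adjoint (A x) i j)) = (fun x => complex.Re (A x j i)).
      by apply: funext => x; rewrite /adjoint !mxE ReJ.
    exact: hre.
  have -> : (fun x => complex.Im (adjoint (A x) i j)) = (fun x => - complex.Im (A x j i)).
    by apply: funext => x; rewrite /adjoint !mxE ImJ.
  exact: meas_onN.
exists lam, Lam; split => //; apply: ae_mono hae => x _ hx xi sigma.
have [H1 _] := hx xi xi; have [_ H2] := hx sigma xi.
split.
  have -> : complex.Re (cip (adjoint (A x) *m xi) xi) = complex.Re (cip (A x *m xi) xi).
    by rewrite cip_adj adjointK; exact: ReCipC.
  exact: H1.
rewrite cip_adj adjointK cipC normc_conj.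
by rewrite mulrAC.
Qed.

Lemma interp_aff (r s p a b L : R) : r <= s -> s <= p ->
  L <= (r - 1) * a + b -> L <= (p - 1) * a + b -> L <= (s - 1) * a + b.
Proof.
move=> rs sp h1 h2; case: (leP 0 a) => a0.
  have : 0 <= (s - r) * a by rewrite mulr_ge0 // subr_ge0.
  by move=> H; nra.
have : 0 <= (p - s) * (- a) by rewrite mulr_ge0 // ?subr_ge0 // oppr_ge0 ltW.
by move=> H; nra.
Qed.


Lemma S_dual p (Om : set Pt) (A : Pt -> 'M[C]_d) (b c : Pt -> V) (Vf : Pt -> R) :
  1 < p -> S_class p Om (A, b, c, Vf) ->
  S_class (p / (p - 1)) Om ((fun x => adjoint (A x)), c, b, Vf).
Proof.
move=> p1 [[eA [lb [lc lV]]] [_ hD] [Mb [M0 hM]] [mu [mu0 hG]]].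
have pp : 0 < p by apply: lt_trans p1.
have p10 : 0 < p - 1 by rewrite subr_gt0.
set q := p / (p - 1).
have p0 : p != 0 by rewrite gt_eqF.
have hq1 : q - 1 = (p - 1)^-1.
  by rewrite /q; field; rewrite gt_eqF.
have q1 : 1 < q by rewrite -subr_gt0 hq1 invr_gt0.
have q0 : q != 0 by rewrite gt_eqF // (lt_trans ltr01).
have hpq : (p - 1) * (q - 1) = 1 by rewrite hq1 mulfV // gt_eqF.
have eA' := ellA_adj eA.
pose m := Num.min ((q - 1) ^+ 2) 1.
have m0 : 0 < m by exact: min_gt0.
split.
- by split => //; split.
- split; first exact: eA'.
  apply/(Delta_pos _ _ (lt_trans ltr01 q1)).
  move: hD => /(Delta_pos _ _ pp) [delta [d0 hae]].
  exists (delta * m); split; first by rewrite mulr_gt0.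
  apply: ae_mono hae => x _ hx u.
  rewrite (G_dual (A x) u p0 q0 hpq); apply: le_trans (hx (Js q u)).
  rewrite -mulrA; apply: ler_wpM2l; first exact: ltW.
  exact: (N2J_lb u q0).
- exists Mb; split => //; apply: ae_mono hM => x _.
  by rewrite cnormB.
- exists (mu * m); split; first by rewrite mulr_gt0.
  apply: ae_mono hG => x Ox hx u.
  change (mu * m * (cnorm u ^+ 2 + Vf x) <= Gam q (adjoint (A x)) (c x) (b x) (Vf x) u).
  rewrite -(Gam_dual (A x) (b x) (c x) (Vf x) u p0 q0 hpq).
  apply: le_trans (hx (Js q u)).
  rewrite -mulrA; apply: ler_wpM2l; first exact: ltW.
  rewrite mulrDr; apply: lerD; first exact: (N2J_lb u q0).
  rewrite -[leRHS]mul1r; apply: ler_wpM2r; first exact: lV.1.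
  by rewrite ge_min lexx orbT.
Qed.

Lemma S_interp r s p (Om : set Pt) Q : 0 < r -> r <= s <= p ->
  S_class r Om Q -> S_class p Om Q -> S_class s Om Q.
Proof.
case: Q => [[[A b] c] Vf] r0 /andP[rs sp].
move=> [h1 [eA hDr] hM [mur [mur0 hGr]]] [_ [_ hDp] _ [mup [mup0 hGp]]].
have s0 : 0 < s by apply: lt_le_trans rs.
have p0 : 0 < p by apply: lt_le_trans sp.
have s0' : s != 0 by rewrite gt_eqF.
have r0' : r != 0 by rewrite gt_eqF.
have p0' : p != 0 by rewrite gt_eqF.
split; [exact: h1| | exact: hM |].
- split; first exact: eA.
  apply/(Delta_pos _ _ s0).
  move: hDr => /(Delta_pos _ _ r0) [dr [dr0 har]].
  move: hDp => /(Delta_pos _ _ p0) [dp [dp0 hap]].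
  exists (Num.min dr dp); split; first by rewrite lt_min dr0 dp0.
  apply: ae_mono (ae_and har hap) => x _ [hr hp] u.
  have N0 := exprn_ge0 2 (cnorm_ge0 u).
  have := hr u; have := hp u; rewrite !G_P // => Hp Hr.
  apply: (interp_aff rs sp).
    by apply: le_trans Hr; apply: ler_wpM2r => //; rewrite ge_min lexx.
  by apply: le_trans Hp; apply: ler_wpM2r => //; rewrite ge_min lexx orbT.
- exists (Num.min mur mup); split; first by rewrite lt_min mur0 mup0.
  apply: ae_mono (ae_and hGr hGp) => x Ox [hr hp] u.
  have N0 : 0 <= cnorm u ^+ 2 + Vf x.
    by rewrite addr_ge0 ?exprn_ge0 ?cnorm_ge0 //; case: h1 => _ [_ [_ [lV _]]]; exact: lV.
  have := hr u; have := hp u.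
  change (mup * (cnorm u ^+ 2 + Vf x) <= Gam p (A x) (b x) (c x) (Vf x) u ->
          mur * (cnorm u ^+ 2 + Vf x) <= Gam r (A x) (b x) (c x) (Vf x) u ->
          Num.min mur mup * (cnorm u ^+ 2 + Vf x) <= Gam s (A x) (b x) (c x) (Vf x) u).
  rewrite !Gam_aff // => Hp Hr.
  apply: (interp_aff rs sp).
    by apply: le_trans Hr; apply: ler_wpM2r => //; rewrite ge_min lexx.
  by apply: le_trans Hp; apply: ler_wpM2r => //; rewrite ge_min lexx orbT.
Qed.

End Main.

Unset Implicit Arguments. Set Strict Implicit.
Theorem proposition3p2 (R : realType) (d : nat) (Omega : set 'rV[R]_d)
    (A : 'rV[R]_d -> 'M[R[i]]_d) (b c : 'rV[R]_d -> 'cV[R[i]]_d)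
    (V : 'rV[R]_d -> R) (r p : R) :
  open Omega -> Omega !=set0 ->
  ellA Omega A -> Linf Omega b -> Linf Omega c -> L1loc_nonneg Omega V ->
  1 < r -> r < p ->
  let q := p / (p - 1) in
  (S_class p Omega (A, b, c, V) <->
     S_class q Omega ((fun x => adjoint (A x)), c, b, V)) /\
  (forall s : R, r <= s <= p ->
     S_class r Omega `&` S_class p Omega `<=` S_class s Omega) /\
  (forall p1 p2 : R, 2 <= p1 -> p1 <= p2 ->
     B_class p2 Omega `<=` B_class p1 Omega).
Proof.
move=> _ _ _ _ _ _ r1 rp q.
have p1 : 1 < p by apply: lt_trans rp.
have conj_gt1 (t : R) : 1 < t -> 1 < t / (t - 1).
  move=> t1; have t10 : 0 < t - 1 by rewrite subr_gt0.
  rewrite -subr_gt0 (_ : t / (t - 1) - 1 = (t - 1)^-1) ?invr_gt0 //.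
  by field; rewrite gt_eqF.
have conjK (t : R) : 1 < t -> (t / (t - 1)) / (t / (t - 1) - 1) = t.
  move=> t1; have t10 : t - 1 != 0 by rewrite gt_eqF // subr_gt0.
  have t0 : t != 0 by rewrite gt_eqF // (lt_trans ltr01).
  by field; rewrite t10 /= (_ : t + -1 * (t - 1) = 1) ?oner_eq0 //; ring.
split; [|split].
- split => H; first exact: S_dual.
  have := S_dual (conj_gt1 _ p1) H.
  have e : q / (q - 1) = p by exact: conjK.
  rewrite e.
  by have -> : (fun x => adjoint (adjoint (A x))) = A by apply: funext => x; rewrite adjointK.
- move=> s hs Q [Hr Hp]; apply: (S_interp _ hs Hr Hp).
  by apply: lt_trans r1.
- move=> a1 a2 h2 h12 Q [H1 H2].
  have a11 : 1 < a1 by apply: lt_le_trans h2; rewrite ltr1n.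
  have a21 : 1 < a2 by apply: lt_le_trans h12.
  have a10 : 0 < a1 - 1 by rewrite subr_gt0.
  have a20 : 0 < a2 - 1 by rewrite subr_gt0.
  have c2 : a2 / (a2 - 1) <= 2.
    rewrite ler_pdivrMr //; have : 2 <= a2 by apply: le_trans h12.
    by move=> ?; lra.
  have c1 : a1 / (a1 - 1) <= 2.
    by rewrite ler_pdivrMr //; lra.
  have c3 : a2 / (a2 - 1) <= a1 / (a1 - 1).
    rewrite ler_pdivrMr // mulrAC ler_pdivlMr //; nra.
  have r0 : 0 < a2 / (a2 - 1) by rewrite divr_gt0 // (lt_trans ltr01).
  split.
  + apply: (S_interp r0 _ H2 H1); rewrite h12 andbT.
    by apply: le_trans c2 h2.
  + apply: (S_interp r0 _ H2 H1); rewrite c3 /=.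
    by apply: le_trans c1 (le_trans h2 h12).
Qed.
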